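(* Let $\widetilde{\eta}\in\mathbf{R}$ with $|\widetilde\eta|$ large, let $\lambda>0$, and define $$\mathfrak{g}(a,\tau,\widetilde{\eta},\lambda):=-\lambda a+\frac{2\widetilde{\eta}^2(1-\tau)}{\tau}+\frac{2-\tau}{2a^2\tau^2}.$$ Let $$\Omega:=\Bigl[0,\tfrac{1}{3\sqrt3}-\tfrac{\mathrm{i}}{3}\Bigr]\cup\Bigl(\tfrac{1}{3\sqrt3}-\tfrac{\mathrm{i}}{3},1-\tfrac{1}{3\sqrt3}-\tfrac{\mathrm{i}}{3}\Bigr]\cup\Bigl(1-\tfrac{1}{3\sqrt3}-\tfrac{\mathrm{i}}{3},1\Bigr]$$ (traversed from $0$ to $1$) and $$\Lambda:=[0,z_0]\cup\bigl(z_0,z_0+e^{3\mathrm{i}\pi/5}\infty\bigr),\qquad z_0:=\frac{\sin(4\pi/15)}{\sin(17\pi/30)}e^{\mathrm{i}\pi/6},$$ and, for a fixed large constant $C>0$, set $$\widetilde\Omega:=\{\tau\in\Omega:|\tau|\le C|\widetilde{\eta}|^{-1/2}\},\qquad \widetilde\Lambda:=\{a\in\Lambda:|a|\le|\widetilde{\eta}|^{-1/2}\}.$$ Then for any large constant $C_0>0$, any fixed $\gamma\in\mathbf{R}$ and any $C_0^{-1}\le\lambda\le C_0$, $$\int_{\Omega\setminus\widetilde\Omega}\tau^{-\gamma}e^{\mathfrak{g}(a,1,\widetilde{\eta},\lambda)-\mathfrak{g}(a,\tau,\widetilde{\eta},\lambda)}\,\mathrm{d}\tau=\frac{1}{2\widetilde{\eta}^2}+\mathcal{O}\bigl(|\widetilde{\eta}|^{-3}\bigr)$$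 uniformly in $a\in\Lambda\setminus\widetilde\Lambda$, where the implicit constant in $\mathcal{O}(\cdot)$ depends on $C_0$.
   Context: $\tau^{-\gamma}$ denotes the principal branch. The function $\mathfrak{g}$ is the phase function of the limiting one-point function of the shifted real Ginibre ensemble at the edge ($\widetilde\delta=0$); note that $\mathfrak{g}(a,1,\widetilde\eta,\lambda)-\mathfrak{g}(a,\tau,\widetilde\eta,\lambda)=-\frac{2\widetilde\eta^2(1-\tau)}{\tau}+\frac{\tau^2+\tau-2}{2a^2\tau^2}$. The asymptotic statement is as $|\widetilde\eta|\to\infty$. *)

(* Defs.v *)
From Stdlib Require Import Reals.
From Coquelicot Require Import Coquelicot.
Open Scope R_scope.

Definition cexp (z : C) : C :=
  (exp (Re z) * cos (Im z), exp (Re z) * sin (Im z)).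

(* principal argument, with values in (-PI, PI]; Carg 0 = 0 *)
Definition Carg (z : C) : R :=
  let x := Re z in let y := Im z in
  if Rlt_dec 0 x then atan (y / x)
  else if Rlt_dec x 0 then
    (if Rle_dec 0 y then atan (y / x) + PI else atan (y / x) - PI)
  else if Rlt_dec 0 y then PI / 2
  else if Rlt_dec y 0 then - (PI / 2)
  else 0.

Definition Clog (z : C) : C := (ln (Cmod z), Carg z).

Definition cpow_pr (z w : C) : C := cexp (Cmult w (Clog z)).

Definition gfrak (a tau : C) (eta lam : R) : C :=
  Cplus (Cplus (Cmult (RtoC (- lam)) a)
               (Cdiv (Cmult (RtoC (2 * eta ^ 2)) (Cminus (RtoC 1) tau)) tau))
        (Cdiv (Cminus (RtoC 2) tau)
              (Cmult (RtoC 2) (Cmult (Cmult a a) (Cmult tau tau)))).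

(* The contour integral of f over the part of the oriented segment [p, q]
   lying in the region {z : |z| > rho}:
     int_{[p,q] ∩ {|z|>rho}} f(z) dz
       = (q - p) * int_0^1 1_{|p + s(q-p)| > rho} f(p + s(q-p)) ds. *)
Definition seg_int_outside (f : C -> C) (rho : R) (p q : C) : C :=
  Cmult (Cminus q p)
    (RInt (V := C_R_CompleteNormedModule)
       (fun s : R => let z := Cplus p (Cmult (RtoC s) (Cminus q p)) in
                     if Rlt_dec rho (Cmod z) then f z else RtoC 0) 0 1).

(* vertices of the contour Omega: 0 -> P1 -> P2 -> 1 *)
Definition OmP1 : C := (1 / (3 * sqrt 3), - (1 / 3)).
Definition OmP2 : C := (1 - 1 / (3 * sqrt 3), - (1 / 3)).

Definition Omega_int_outside (f : C -> C) (rho : R) : C :=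
  Cplus (Cplus (seg_int_outside f rho (RtoC 0) OmP1)
               (seg_int_outside f rho OmP1 OmP2))
        (seg_int_outside f rho OmP2 (RtoC 1)).

Definition z0 : C :=
  Cmult (RtoC (sin (4 * PI / 15) / sin (17 * PI / 30)))
        (cos (PI / 6), sin (PI / 6)).

Definition in_Lambda (a : C) : Prop :=
  (exists t : R, 0 <= t <= 1 /\ a = Cmult (RtoC t) z0) \/
  (exists s : R, 0 < s /\ a = Cplus z0 (Cmult (RtoC s) (cos (3 * PI / 5), sin (3 * PI / 5)))).

(* Main.v *)
Require Import Defs.
From Stdlib Require Import Reals Lra Psatz.
From Coquelicot Require Import Coquelicot.
Open Scope R_scope.

Definition CDc (f : R -> C) (x : R) (l : C) : Prop :=
  is_derive (fun y => fst (f y)) x (fst l) /\ is_derive (fun y => snd (f y)) x (snd l).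

Lemma CDc_CD (f : R -> C) x l : CDc f x l ->
  is_derive (K := R_AbsRing) (V := C_R_CompleteNormedModule) f x l.
Proof.
  intros [H1 H2].
  destruct l as [l1 l2].
  unfold is_derive in *.
  refine (@filterdiff_ext_lin R_AbsRing R_NormedModule C_R_NormedModule _ _ _
     (fun y : R => ((scal y l1 : R), (scal y l2 : R)) : C) _ _ _).
  - refine (@filterdiff_ext R_AbsRing R_NormedModule C_R_NormedModule _ _
       (fun y => ((fst (f y), snd (f y)) : C)) _ _ _ _).
    { intro y; destruct (f y); reflexivity. }
    apply (filterdiff_comp_2 (K:=R_AbsRing) (U:=R_NormedModule) (V:=R_NormedModule)
        (W:=C_R_NormedModule) _ _ (fun u v => ((u, v) : C)) _ _ (fun u v => ((u, v) : C)) H1 H2).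
    apply filterdiff_linear.
    split.
    + intros [a b] [c d]; reflexivity.
    + intros k [a b]; reflexivity.
    + exists 1. split. lra. intros [a b]. simpl.
      rewrite Rmult_1_l. apply Rle_refl.
  - intro y; reflexivity.
Qed.
Lemma rd_mult f g x a b : is_derive f x a -> is_derive g x b ->
  is_derive (fun t => f t * g t) x (a * g x + f x * b).
Proof. intros Ha Hb. apply (is_derive_mult f g x a b Ha Hb). intros; apply Rmult_comm. Qed.
Lemma rd_plus f g x a b : is_derive f x a -> is_derive g x b ->
  is_derive (fun t => f t + g t) x (a + b).
Proof. intros Ha Hb. apply (is_derive_plus f g x a b Ha Hb). Qed.
Lemma rd_minus f g x a b : is_derive f x a -> is_derive g x b ->
  is_derive (fun t => f t - g t) x (a - b).
Proof. intros Ha Hb. apply (is_derive_minus f g x a b Ha Hb). Qed.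
Lemma rd_comp (F : R -> R) f x a dF : is_derive F (f x) dF -> is_derive f x a ->
  is_derive (fun t => F (f t)) x (a * dF).
Proof. intros H1 H2. apply (is_derive_comp F f x dF a H1 H2). Qed.
Lemma rd_exp x : is_derive exp x (exp x).
Proof. apply is_derive_Reals. apply derivable_pt_lim_exp. Qed.
Lemma rd_cos x : is_derive cos x (- sin x).
Proof. apply is_derive_Reals. apply derivable_pt_lim_cos. Qed.
Lemma rd_sin x : is_derive sin x (cos x).
Proof. apply is_derive_Reals. apply derivable_pt_lim_sin. Qed.
Lemma rd_opp (f : R -> R) x a : is_derive f x a -> is_derive (fun t => - f t) x (- a).
Proof. intro H. apply (is_derive_opp f x a H). Qed.
Lemma rd_const (c x : R) : is_derive (fun _ => c) x 0.
Proof. apply (is_derive_const c x). Qed.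

Lemma is_derive_eqv (f : R -> R) (x a b : R) : a = b -> is_derive f x a -> is_derive f x b.
Proof. intros ->; auto. Qed.

Lemma CDc_const (c : C) x : CDc (fun _ => c) x (RtoC 0).
Proof. split; simpl; apply rd_const. Qed.

Lemma CDc_plus f g x a b : CDc f x a -> CDc g x b -> CDc (fun t => Cplus (f t) (g t)) x (Cplus a b).
Proof. intros [H1 H2] [H3 H4]; split; simpl; [apply rd_plus|apply rd_plus]; auto. Qed.

Lemma CDc_minus f g x a b : CDc f x a -> CDc g x b -> CDc (fun t => Cminus (f t) (g t)) x (Cminus a b).
Proof. intros [H1 H2] [H3 H4]; split; simpl.
  - eapply is_derive_eqv; cycle 1. { apply rd_plus; [exact H1 | apply rd_opp; exact H3]. } cbv beta; ring.
  - eapply is_derive_eqv; cycle 1. { apply rd_plus; [exact H2 | apply rd_opp; exact H4]. } cbv beta; ring.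
Qed.

Lemma CDc_mult f g x a b : CDc f x a -> CDc g x b ->
  CDc (fun t => Cmult (f t) (g t)) x (Cplus (Cmult a (g x)) (Cmult (f x) b)).
Proof. intros [H1 H2] [H3 H4]; split; simpl.
  - eapply is_derive_eqv; cycle 1. { apply rd_minus; apply rd_mult; eauto. } cbv beta; ring.
  - eapply is_derive_eqv; cycle 1. { apply rd_plus; apply rd_mult; eauto. } cbv beta; ring.
Qed.


Lemma CDc_cexp f x a : CDc f x a -> CDc (fun t => cexp (f t)) x (Cmult (cexp (f x)) a).
Proof. intros [H1 H2]; unfold cexp, Re, Im; split; simpl.
  - eapply is_derive_eqv; cycle 1. { apply rd_mult; apply rd_comp; eauto using rd_exp, rd_cos. } cbv beta; ring.
  - eapply is_derive_eqv; cycle 1. { apply rd_mult; apply rd_comp; eauto using rd_exp, rd_sin. } cbv beta; ring.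
Qed.

Definition aff (p d : C) (s : R) : C := Cplus p (Cmult (RtoC s) d).

Lemma CDc_aff p d x : CDc (aff p d) x d.
Proof. unfold aff; destruct p as [p1 p2]; destruct d as [d1 d2]; split; simpl.
  - auto_derive. auto. ring.
  - auto_derive. auto. ring.
Qed.

Ltac neq H := let HH := fresh in intro HH; apply H; etransitivity; [|exact HH]; ring.

Ltac neq2 H := match goal with |- 0 < ?a /\ _ => split; [ replace a with (a) by ring; eapply Rlt_le_trans; [exact H| right; ring] | auto] end.

Ltac neqp H := let HH := fresh in intro HH; match type of H with 0 < ?a => assert (a = 0) by (etransitivity; [|exact HH]; ring); lra end.

Ltac posp H := eapply Rlt_le_trans; [exact H | right; ring].

Lemma sumsq0 a b : a ^ 2 + b ^ 2 = 0 -> a = 0 /\ b = 0.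
Proof. intro H. destruct (Req_dec a 0) as [Ha|Ha].
  - subst. split; auto. destruct (Req_dec b 0); auto. assert (0 < b^2) by (apply pow2_gt_0; auto). nra.
  - assert (0 < a^2) by (apply pow2_gt_0; auto). assert (0 <= b^2) by apply pow2_ge_0. lra. Qed.

Lemma CDc_inv_aff p d x : aff p d x <> RtoC 0 ->
  CDc (fun s => Cinv (aff p d s)) x (Copp (Cmult d (Cmult (Cinv (aff p d x)) (Cinv (aff p d x))))).
Proof.
  unfold aff; destruct p as [p1 p2]; destruct d as [d1 d2]; intro Hn.
  assert (HN : (p1 + (x * d1 - 0 * d2)) ^ 2 + (p2 + (x * d2 + 0 * d1)) ^ 2 <> 0).
  { intro H0. apply Hn. simpl.
    destruct (sumsq0 _ _ H0) as [A B].
    apply injective_projections; simpl; lra. }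
  assert (HN' : (p1 + x * d1) * (p1 + x * d1) + (p2 + x * d2) * (p2 + x * d2) <> 0).
  { intro H; apply HN; etransitivity; [|exact H]; ring. }
  split; simpl.
  - auto_derive. neq HN. field. neq HN.
  - auto_derive. neq HN. field. neq HN.
Qed.

Definition Lg (z : C) : C := (ln (fst z ^ 2 + snd z ^ 2) / 2, atan (snd z / fst z)).

Lemma CDc_Lg_aff p d x : fst (aff p d x) <> 0 ->
  CDc (fun s => Lg (aff p d s)) x (Cmult d (Cinv (aff p d x))).
Proof.
  unfold aff, Lg; destruct p as [p1 p2]; destruct d as [d1 d2]; simpl; intro Hn.
  assert (Hn' : p1 + x * d1 <> 0) by neq Hn.
  assert (HN : 0 < (p1 + x * d1) ^ 2 + (p2 + x * d2) ^ 2).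
  { assert (0 < (p1 + x * d1) ^ 2) by (apply pow2_gt_0; auto). pose proof (pow2_ge_0 (p2 + x * d2)). lra. }
  split; simpl.
  - apply (is_derive_ext (fun y => ln ((p1 + y*d1)^2 + (p2+y*d2)^2) / 2)).
    { intro t; apply (f_equal (fun u => ln u / 2)); ring. }
    auto_derive. posp HN. field. repeat split; neqp HN.
  - apply (is_derive_ext (fun y => atan ((p2 + y*d2) / (p1 + y*d1)))).
    { intro t; apply (f_equal atan); unfold Rdiv; apply f_equal2; [ring| apply f_equal; ring]. }
    auto_derive. neq Hn'. field. repeat split; first [neqp HN | neq Hn'].
Qed.

Definition bb (a : C) : C := Cinv (Cmult (RtoC 2) (Cmult a a)).
Definition Ep (a : C) (k : R) (t : C) : C :=
  Cminus (Cmult (bb a) (Cminus (Cplus (RtoC 1) (Cinv t)) (Cmult (RtoC 2) (Cmult (Cinv t) (Cinv t)))))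
         (Cmult (RtoC k) (Cminus (Cinv t) (RtoC 1))).
Definition Phi a gam k t := Cplus (Cmult (RtoC (2 - gam)) (Lg t)) (Ep a k t).
Definition Qf a gam t := Cplus (Cmult (RtoC (2-gam)) (Cinv t))
  (Cmult (bb a) (Cplus (Copp (Cmult (Cinv t) (Cinv t))) (Cmult (RtoC 4) (Cmult (Cinv t) (Cmult (Cinv t) (Cinv t)))))).
Definition Phid a gam k t := Cplus (Qf a gam t) (Cmult (RtoC k) (Cmult (Cinv t) (Cinv t))).
Definition R0 a gam k t := Cmult (cexp (Phi a gam k t)) (Cmult (Qf a gam t) (RtoC (/k))).
Definition Gd a gam k t := Cmult (cexp (Phi a gam k t)) (Cmult (Phid a gam k t) (RtoC (/k))).

Lemma CDc_eqv f x l l' : l = l' -> CDc f x l -> CDc f x l'.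
Proof. intros ->; auto. Qed.

Lemma CDc_opp f x a : CDc f x a -> CDc (fun t => Copp (f t)) x (Copp a).
Proof. intros [H1 H2]; split; simpl; apply rd_opp; auto. Qed.

Ltac cdc1 := match goal with
 | |- CDc (fun s => Cplus _ _) _ _ => apply CDc_plus
 | |- CDc (fun s => Cminus _ _) _ _ => apply CDc_minus
 | |- CDc (fun s => Cmult _ _) _ _ => apply CDc_mult
 | |- CDc (fun s => cexp _) _ _ => apply CDc_cexp
 | |- CDc (fun s => Copp _) _ _ => apply CDc_opp
 | |- CDc (fun s => Cinv (aff _ _ s)) _ _ => apply CDc_inv_aff; assumption
 | |- CDc (fun s => Lg (aff _ _ s)) _ _ => apply CDc_Lg_aff; assumption
 | |- CDc (aff _ _) _ _ => apply CDc_aff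
 | |- CDc (fun s => aff _ _ s) _ _ => apply CDc_aff
 | |- CDc (fun _ => _) _ _ => apply CDc_const
 end.
Ltac cdc := repeat cdc1.

Lemma RtoC2 : RtoC 2 = Cplus (RtoC 1) (RtoC 1).
Proof. apply injective_projections; simpl; lra. Qed.
Lemma RtoC4 : RtoC 4 = Cmult (RtoC 2) (RtoC 2).
Proof. apply injective_projections; simpl; lra. Qed.

Lemma aff_ne0 p d x : fst (aff p d x) <> 0 -> aff p d x <> RtoC 0.
Proof. intros H E. apply H. rewrite E. reflexivity. Qed.

Lemma CDc_Phi a gam k p d x : fst (aff p d x) <> 0 ->
  CDc (fun s => Phi a gam k (aff p d s)) x (Cmult d (Phid a gam k (aff p d x))).
Proof.
  intro H. pose proof (aff_ne0 _ _ _ H) as H'.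
  unfold Phi, Ep, Phid, Qf.
  eapply CDc_eqv; [ | cdc ].
  cbv beta. rewrite ?RtoC4, ?RtoC2. field. exact H'.
Qed.

Lemma CDc_F a gam k p d x : fst (aff p d x) <> 0 -> d <> RtoC 0 -> k <> 0 ->
  CDc (fun s => Cmult (cexp (Phi a gam k (aff p d s))) (Cinv (Cmult (RtoC k) d))) x
      (Gd a gam k (aff p d x)).
Proof.
  intros H Hd Hk.
  assert (Hk' : RtoC k <> RtoC 0) by (intro E; apply Hk; apply (f_equal fst) in E; exact E).
  eapply CDc_eqv; cycle 1.
  { apply CDc_mult. apply CDc_cexp. apply CDc_Phi. exact H. apply CDc_const. }
  unfold Gd. set (t := aff p d x). set (P := Phid a gam k t). set (E := cexp (Phi a gam k t)).
  assert (RtoC (/ k) = Cinv (RtoC k)).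
  { apply injective_projections; simpl; field; auto. }
  rewrite H0. field. auto.
Qed.

Lemma CDc_cont f x l : CDc f x l -> continuous f x.
Proof. intro H. apply (ex_derive_continuous (K := R_AbsRing) (V := C_R_CompleteNormedModule)).
  exists l. apply CDc_CD. exact H. Qed.

Lemma cont_Gd a gam k p d x : fst (aff p d x) <> 0 ->
  continuous (fun s => Gd a gam k (aff p d s)) x.
Proof. intro H. pose proof (aff_ne0 _ _ _ H).
  eapply CDc_cont. unfold Gd, Phid, Qf, Phi, Ep. cdc. Qed.

Lemma cont_R0 a gam k p d x : fst (aff p d x) <> 0 ->
  continuous (fun s => R0 a gam k (aff p d s)) x.
Proof. intro H. pose proof (aff_ne0 _ _ _ H).
  eapply CDc_cont. unfold R0, Phid, Qf, Phi, Ep. cdc. Qed.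

Lemma minus_C (u v : C) : @minus C_R_CompleteNormedModule u v = Cminus u v.
Proof. reflexivity. Qed.

Lemma FTC_seg a gam k p d lo hi : lo <= hi -> d <> RtoC 0 -> k <> 0 ->
  (forall s, lo <= s <= hi -> 0 < fst (aff p d s)) ->
  is_RInt (fun s => Gd a gam k (aff p d s)) lo hi
    (Cminus (Cmult (cexp (Phi a gam k (aff p d hi))) (Cinv (Cmult (RtoC k) d)))
            (Cmult (cexp (Phi a gam k (aff p d lo))) (Cinv (Cmult (RtoC k) d)))).
Proof.
  intros Hlh Hd Hk Hpos.
  rewrite <- minus_C.
  apply (is_RInt_derive (V := C_R_CompleteNormedModule)
     (fun s => Cmult (cexp (Phi a gam k (aff p d s))) (Cinv (Cmult (RtoC k) d)))).
  - intros s Hs. rewrite Rmin_left, Rmax_right in Hs by lra.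
    apply CDc_CD. apply CDc_F; auto. specialize (Hpos s Hs). lra.
  - intros s Hs. rewrite Rmin_left, Rmax_right in Hs by lra.
    apply cont_Gd. specialize (Hpos s Hs). lra.
Qed.

Lemma cexp_add u v : cexp (Cplus u v) = Cmult (cexp u) (cexp v).
Proof. unfold cexp, Re, Im; simpl. rewrite exp_plus, cos_plus, sin_plus.
  apply injective_projections; simpl; ring. Qed.

Lemma ln_sqrt' x : 0 < x -> ln (sqrt x) = ln x / 2.
Proof. intro H. assert (Hs : 0 < sqrt x) by (apply sqrt_lt_R0; auto).
  assert (ln x = ln (sqrt x * sqrt x)) by (rewrite sqrt_sqrt; lra).
  rewrite H0, ln_mult by auto. field. Qed.

Lemma Clog_Lg t : 0 < fst t -> Clog t = Lg t.
Proof. intro H. destruct t as [x y]; simpl in H. unfold Clog, Lg, Carg, Cmod, Re, Im; cbn [fst snd].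
  assert (0 < x ^ 2 + y ^ 2) by (pose proof (pow2_ge_0 y); assert (0 < x^2) by (apply pow2_gt_0; lra); lra).
  rewrite ln_sqrt' by auto.
  destruct (Rlt_dec 0 x); [reflexivity | lra]. Qed.

Lemma cexp_Lg t : 0 < fst t -> cexp (Lg t) = t.
Proof. intro H. destruct t as [x y]; simpl in H. unfold cexp, Lg, Re, Im; cbn [fst snd].
  assert (HN : 0 < x ^ 2 + y ^ 2) by (pose proof (pow2_ge_0 y); assert (0 < x^2) by (apply pow2_gt_0; lra); lra).
  assert (E1 : exp (ln (x ^ 2 + y ^ 2) / 2) = sqrt (x^2 + y^2)).
  { rewrite <- ln_sqrt' by auto. apply exp_ln. apply sqrt_lt_R0; auto. }
  assert (E2 : sqrt (1 + (y / x)²) = sqrt (x^2+y^2) / x).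
  { replace (1 + (y/x)²) with ((x^2+y^2) / (x*x)) by (unfold Rsqr; field; lra).
    rewrite sqrt_div_alt by nra. rewrite sqrt_square by lra. reflexivity. }
  rewrite E1, cos_atan, sin_atan, E2.
  assert (0 < sqrt (x^2+y^2)) by (apply sqrt_lt_R0; auto).
  apply injective_projections; cbn [fst snd]; field; lra.
Qed.

Lemma RtoC_inj_ne (k : R) : k <> 0 -> RtoC k <> RtoC 0.
Proof. intros H E; apply H; apply (f_equal fst) in E; exact E. Qed.

Lemma RtoC_inv k : k <> 0 -> RtoC (/ k) = Cinv (RtoC k).
Proof. intro. apply injective_projections; simpl; field; auto. Qed.

Lemma gfrak_diff a t eta lam : a <> RtoC 0 -> t <> RtoC 0 ->
  Cminus (gfrak a (RtoC 1) eta lam) (gfrak a t eta lam) = Ep a (2 * eta ^ 2) t.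
Proof. intros Ha Ht. unfold gfrak, Ep, bb. rewrite ?RtoC4, ?RtoC2.
  field. auto. Qed.

Definition integ (a : C) (eta lam gam : R) (tau : C) : C :=
  Cmult (cpow_pr tau (RtoC (- gam)))
        (cexp (Cminus (gfrak a (RtoC 1) eta lam) (gfrak a tau eta lam))).

Lemma integ_eq a eta lam gam t : a <> RtoC 0 -> eta <> 0 -> 0 < fst t ->
  integ a eta lam gam t = Cminus (Gd a gam (2 * eta ^ 2) t) (R0 a gam (2 * eta ^ 2) t).
Proof.
  intros Ha He Ht.
  assert (Ht0 : t <> RtoC 0) by (intro E; rewrite E in Ht; simpl in Ht; lra).
  assert (Hk : 2 * eta ^ 2 <> 0) by (assert (0 < eta ^ 2) by (apply pow2_gt_0; auto); lra).
  unfold integ, cpow_pr, Gd, R0. rewrite gfrak_diff by auto. rewrite Clog_Lg by auto.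
  unfold Phi.
  replace (RtoC (2 - gam)) with (Cplus (RtoC (- gam)) (Cplus (RtoC 1) (RtoC 1)))
    by (apply injective_projections; simpl; ring).
  replace (Cplus (Cmult (Cplus (RtoC (- gam)) (Cplus (RtoC 1) (RtoC 1))) (Lg t)) (Ep a (2 * eta ^ 2) t))
    with (Cplus (Cplus (Cplus (Cmult (RtoC (- gam)) (Lg t)) (Lg t)) (Lg t)) (Ep a (2 * eta ^ 2) t)) by ring.
  rewrite !cexp_add, cexp_Lg by auto.
  rewrite RtoC_inv by auto.
  unfold Phid. set (k := 2 * eta ^ 2). set (Q := Qf a gam t).
  set (A := cexp (Cmult (RtoC (- gam)) (Lg t))). set (B := cexp (Ep a k t)).
  field. split; auto. apply RtoC_inj_ne; auto.
Qed.

Lemma Cmod_cexp z : Cmod (cexp z) = exp (fst z).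
Proof. unfold cexp, Cmod, Re, Im; cbn [fst snd].
  replace ((exp (fst z) * cos (snd z)) ^ 2 + (exp (fst z) * sin (snd z)) ^ 2) with (exp (fst z) ^ 2)
    by (pose proof (sin2_cos2 (snd z)); unfold Rsqr in *; nra).
  rewrite sqrt_pow2; auto. left; apply exp_pos. Qed.

Definition ww (t : C) : C := Cminus (Cplus (RtoC 1) (Cinv t)) (Cmult (RtoC 2) (Cmult (Cinv t) (Cinv t))).

Lemma fst_le_Cmod z : fst z <= Cmod z.
Proof. pose proof (re_le_Cmod z). unfold Re in H. pose proof (Rle_abs (fst z)). lra. Qed.

Lemma fst_Phi_le a gam k t :
  fst (Phi a gam k t) <= (2 - gam) * fst (Lg t) + Cmod (bb a) * Cmod (ww t) - k * (fst (Cinv t) - 1).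
Proof.
  unfold Phi, Ep. fold (ww t).
  pose proof (fst_le_Cmod (Cmult (bb a) (ww t))). rewrite Cmod_mult in H.
  cbn [fst snd Cplus Cminus Cmult Copp RtoC] in *. simpl. simpl in H. nra.
Qed.

Lemma Cmod_R0 a gam k t : 0 < k ->
  Cmod (R0 a gam k t) = exp (fst (Phi a gam k t)) * Cmod (Qf a gam t) / k.
Proof. intro Hk. unfold R0. rewrite !Cmod_mult, Cmod_cexp, Cmod_R.
  rewrite Rabs_right. unfold Rdiv; ring. left; apply Rinv_0_lt_compat; auto. Qed.

Lemma Cmod_Qf_le a gam t : t <> RtoC 0 ->
  Cmod (Qf a gam t) <= Rabs (2 - gam) * / Cmod t
     + Cmod (bb a) * ((/ Cmod t) ^ 2 + 4 * (/ Cmod t) ^ 3).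
Proof. intro Ht. unfold Qf.
  eapply Rle_trans; [apply Cmod_triangle|].
  rewrite !Cmod_mult, Cmod_R, Cmod_inv by auto.
  apply Rplus_le_compat_l. apply Rmult_le_compat_l. apply Cmod_ge_0.
  eapply Rle_trans; [apply Cmod_triangle|].
  rewrite Cmod_opp, !Cmod_mult, Cmod_R, !Cmod_inv by auto.
  rewrite Rabs_right by lra. right; ring. Qed.

Lemma Cmod_ww_le t : t <> RtoC 0 ->
  Cmod (ww t) <= 1 + / Cmod t + 2 * (/ Cmod t) ^ 2.
Proof. intro Ht. unfold ww, Cminus.
  eapply Rle_trans; [apply Cmod_triangle|].
  rewrite Cmod_opp, !Cmod_mult, Cmod_R, !Cmod_inv by auto.
  eapply Rle_trans. apply Rplus_le_compat_r. apply Cmod_triangle.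
  rewrite Cmod_R, Cmod_inv by auto. rewrite !Rabs_right by lra. right; ring. Qed.

Lemma ww_fact t : t <> RtoC 0 ->
  ww t = Cmult (Cmult (Cminus t (RtoC 1)) (Cplus t (RtoC 2))) (Cmult (Cinv t) (Cinv t)).
Proof. intro Ht. unfold ww. rewrite RtoC2. field. auto. Qed.

Lemma Cmod_bb a : a <> RtoC 0 -> Cmod (bb a) = / (2 * Cmod a ^ 2).
Proof. intro Ha. unfold bb.
  assert (Hn : Cmult (RtoC 2) (Cmult a a) <> RtoC 0).
  { apply Cmult_neq_0. apply RtoC_inj_ne; lra. apply Cmult_neq_0; auto. }
  rewrite Cmod_inv by exact Hn. rewrite !Cmod_mult, Cmod_R, Rabs_right by lra.
  f_equal; ring. Qed.

Lemma fst_Lg t : t <> RtoC 0 -> fst (Lg t) = ln (Cmod t).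
Proof. intro Ht. unfold Lg, Cmod; cbn [fst].
  rewrite ln_sqrt'; auto. apply Cmod_gt_0 in Ht. unfold Cmod in Ht.
  destruct (Rle_lt_dec (fst t ^ 2 + snd t ^ 2) 0); auto.
  assert (fst t ^ 2 + snd t ^ 2 = 0) by (pose proof (pow2_ge_0 (fst t)); pose proof (pow2_ge_0 (snd t)); lra).
  rewrite H, sqrt_0 in Ht; lra. Qed.

Definition Psi a gam k p d s := Cmult (cexp (Phi a gam k (aff p d s))) (Cinv (Cmult (RtoC k) d)).

Lemma ex_RInt_R0 a gam k p d lo hi : lo <= hi ->
  (forall s, lo <= s <= hi -> 0 < fst (aff p d s)) ->
  ex_RInt (V := C_R_CompleteNormedModule) (fun s => R0 a gam k (aff p d s)) lo hi.
Proof. intros Hl Hp. apply ex_RInt_continuous. intros z Hz.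
  rewrite Rmin_left, Rmax_right in Hz by lra. apply cont_R0. specialize (Hp z Hz); lra. Qed.

Lemma seg_int (g : R -> C) a gam k p d lo hi :
  lo <= hi -> d <> RtoC 0 -> k <> 0 ->
  (forall s, lo <= s <= hi -> 0 < fst (aff p d s)) ->
  (forall s, lo < s < hi -> g s = Cminus (Gd a gam k (aff p d s)) (R0 a gam k (aff p d s))) ->
  is_RInt g lo hi (Cminus (Cminus (Psi a gam k p d hi) (Psi a gam k p d lo))
                          (RInt (V := C_R_CompleteNormedModule) (fun s => R0 a gam k (aff p d s)) lo hi)).
Proof.
  intros Hl Hd Hk Hp Hg.
  rewrite <- minus_C.
  apply (is_RInt_ext (V := C_R_CompleteNormedModule)
     (fun s => minus (Gd a gam k (aff p d s)) (R0 a gam k (aff p d s)))).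
  { intros x Hx. rewrite Rmin_left, Rmax_right in Hx by lra. rewrite Hg by auto. reflexivity. }
  apply (@is_RInt_minus C_R_NormedModule).
  - unfold Psi. rewrite <- minus_C. apply FTC_seg; auto.
  - exact (RInt_correct _ _ _ (ex_RInt_R0 a gam k p d lo hi Hl Hp)).
Qed.

Lemma RInt_bound (f : R -> C) (g : R -> R) lo hi lg : lo <= hi ->
  ex_RInt (V := C_R_CompleteNormedModule) f lo hi ->
  (forall s, lo <= s <= hi -> Cmod (f s) <= g s) -> is_RInt g lo hi lg ->
  Cmod (RInt (V := C_R_CompleteNormedModule) f lo hi) <= lg.
Proof. intros Hl Hf Hb Hg. rewrite Cmod_norm.
  apply (norm_RInt_le (V := C_R_NormedModule) f g lo hi); auto.
  intros x Hx. rewrite <- Cmod_norm. auto.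
  exact (RInt_correct _ _ _ Hf). Qed.

Lemma ln_le_xm1 x : 0 < x -> ln x <= x - 1.
Proof. intro H. apply Rnot_lt_le. intro Hc. apply exp_increasing in Hc.
  rewrite exp_ln in Hc by auto. pose proof (exp_ineq1_le (x - 1)). lra. Qed.

Lemma exp_ge_sq x : 0 <= x -> x ^ 2 / 4 <= exp x.
Proof. intro H. replace (exp x) with (exp (x/2) * exp (x/2)) by (rewrite <- exp_plus; f_equal; field).
  pose proof (exp_ineq1_le (x/2)). nra. Qed.

Lemma cube_le_exp x : 0 <= x -> x ^ 3 <= 27 * exp x.
Proof. intro H. replace (exp x) with (exp (x/3) * exp (x/3) * exp (x/3)) by (rewrite <- !exp_plus; f_equal; field).
  pose proof (exp_ineq1_le (x/3)). assert (0 <= x/3) by lra.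
  assert (x/3 <= exp (x/3)) by lra.
  assert ((x/3)^3 <= exp (x/3) ^ 3) by (apply pow_incr; lra). simpl in *. nra. Qed.

Lemma exp_neg_bound c x : 0 < c -> 0 < x -> exp (- (c * x ^ 2)) <= 4 / (c ^ 2 * x ^ 4).
Proof. intros Hc Hx. pose proof (exp_ge_sq (c * x ^ 2)).
  assert (0 < c * x ^ 2) by (apply Rmult_lt_0_compat; auto; apply pow_lt; auto).
  rewrite exp_Ropp. assert (0 < exp (c * x^2)) by apply exp_pos.
  assert (0 < c ^ 2 * x ^ 4) by (apply Rmult_lt_0_compat; apply pow_lt; auto).
  replace (4 / (c ^ 2 * x ^ 4)) with (/ ((c * x ^ 2) ^ 2 / 4)) by (field; split; lra).
  apply Rinv_le_contravar. apply Rdiv_lt_0_compat; try lra; apply pow_lt; auto. exact (H (Rlt_le _ _ H0)). Qed.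

Lemma exp_le' x y : x <= y -> exp x <= exp y.
Proof. intro H. destruct (Rle_lt_or_eq_dec _ _ H). left; apply exp_increasing; auto. subst; lra. Qed.

Lemma abs_mul_le a b : a * b <= Rabs a * Rabs b.
Proof. rewrite <- Rabs_mult. apply Rle_abs. Qed.

Lemma seg1_exp gam e B T : 1000 <= e -> Rabs (2 - gam) <= e -> 0 <= B <= e / 2 -> 5/2 <= T <= e / 25 ->
  (2 - gam) * (- ln T) + B * (1 + T + 2 * T ^ 2) - 2 * e ^ 2 * (T / 2 - 1) <= - (e ^ 2 / 10) * T.
Proof.
  intros He Hg HB HT.
  assert (HlnT : 0 <= ln T <= T).
  { split. pose proof (ln_le_xm1 (/ T)). rewrite ln_Rinv in H by lra.
    assert (/ T <= 1) by (apply Rle_trans with (/1); [apply Rinv_le_contravar; lra | rewrite Rinv_1; lra]).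
    assert (0 < / T) by (apply Rinv_0_lt_compat; lra). lra.
    pose proof (ln_le_xm1 T). lra. }
  assert (h1 : (2 - gam) * (- ln T) <= e * T).
  { eapply Rle_trans. apply abs_mul_le. rewrite Rabs_Ropp, (Rabs_right (ln T)) by lra.
    apply Rmult_le_compat; try lra; apply Rabs_pos. }
  assert (h2 : B * (1 + T + 2 * T ^ 2) <= 2 * e * T * (e / 25)).
  { assert (1 + T + 2 * T^2 <= 4 * T^2) by nra.
    assert (B * (1 + T + 2 * T ^ 2) <= (e/2) * (4 * T^2)).
    { apply Rmult_le_compat; nra. }
    assert (2 * e * T * T <= 2 * e * T * (e / 25)) by (apply Rmult_le_compat_l; nra).
    nra. }
  assert (h3 : e * T <= (e ^ 2 / 50) * T) by (apply Rmult_le_compat_r; nra).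
  assert (h4 : 2 * e * T * (e / 25) = (2/25) * e ^ 2 * T) by field.
  assert (h5 : 2 * e ^ 2 <= (4/5) * e ^ 2 * T) by nra.
  nra.
Qed.

Lemma seg1_R0 gam e B T Ex : 1000 <= e -> Rabs (2 - gam) <= e -> 0 <= B <= e / 2 -> 5/2 <= T ->
  Ex <= - (e ^ 2 / 10) * T ->
  exp Ex * (Rabs (2 - gam) * T + B * (T ^ 2 + 4 * T ^ 3)) / (2 * e ^ 2)
    <= 3500 * (Rabs (2 - gam) + 3) / e ^ 3.
Proof.
  intros He Hg HB HT HEx. set (gm := Rabs (2 - gam)) in *.
  assert (Hgm : 0 <= gm) by apply Rabs_pos.
  assert (f1 : gm * T + B * (T ^ 2 + 4 * T ^ 3) <= (gm + 5/2 * e) * T ^ 3).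
  { assert (T <= T^3) by nra. assert (T^2 <= T^3) by nra.
    assert (B * (T ^ 2 + 4 * T ^ 3) <= (e/2) * (5 * T^3)) by (apply Rmult_le_compat; nra).
    nra. }
  assert (f2 : T ^ 3 <= 27 * exp T) by (apply cube_le_exp; lra).
  assert (f3 : exp Ex * exp T <= exp (- ((1/8) * e ^ 2))).
  { rewrite <- exp_plus. apply exp_le'.
    assert (E20 : 20 <= e ^ 2) by nra.
    assert ((e ^ 2 / 10 - 1) * (5/2) <= (e ^ 2 / 10 - 1) * T) by (apply Rmult_le_compat_l; lra).
    nra. }
  assert (f4 : exp (- ((1/8) * e ^ 2)) <= 4 / ((1/8) ^ 2 * e ^ 4)) by (apply exp_neg_bound; lra).
  assert (He3 : 0 < e ^ 3) by (apply pow_lt; lra).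
  assert (0 < exp Ex) by apply exp_pos.
  assert (0 < exp T) by apply exp_pos.
  assert (g1 : exp Ex * (gm * T + B * (T ^ 2 + 4 * T ^ 3)) <= exp Ex * ((gm + 5/2 * e) * (27 * exp T))).
  { apply Rmult_le_compat_l. lra. eapply Rle_trans. exact f1. apply Rmult_le_compat_l; nra. }
  assert (g2 : exp Ex * ((gm + 5/2 * e) * (27 * exp T)) <= 27 * (gm + 5/2 * e) * (4 / ((1/8) ^ 2 * e ^ 4))).
  { replace (exp Ex * ((gm + 5/2 * e) * (27 * exp T))) with (27 * (gm + 5/2 * e) * (exp Ex * exp T)) by ring.
    apply Rmult_le_compat_l. nra. lra. }
  apply Rle_trans with (27 * (gm + 5/2 * e) * (4 / ((1/8) ^ 2 * e ^ 4)) / (2 * e ^ 2)).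
  { unfold Rdiv. apply Rmult_le_compat_r. apply Rlt_le, Rinv_0_lt_compat. nra. lra. }
  replace (27 * (gm + 5/2 * e) * (4 / ((1/8) ^ 2 * e ^ 4)) / (2 * e ^ 2)) with (3456 * (gm + 5/2*e) / e ^ 6) by (field; lra).
  replace (3500 * (gm + 3) / e ^ 3) with (3500 * (gm + 3) * e ^ 3 / e ^ 6) by (field; lra).
  unfold Rdiv. apply Rmult_le_compat_r. apply Rlt_le, Rinv_0_lt_compat. apply pow_lt; lra.
  assert (1 <= e ^ 3) by (replace 1 with (1 ^ 3) by ring; apply pow_incr; lra).
  assert (e <= e ^ 3) by nra.
  nra.
Qed.

Lemma bdry_R e T Ex : 1 <= e -> 5/2 <= T -> Ex <= - (e ^ 2 / 10) * T -> exp Ex / (2 * e ^ 2) <= 1 / e ^ 3.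
Proof. intros He HT HEx.
  assert (h1 : exp Ex <= exp (- (e ^ 2 / 4))) by (apply exp_le'; nra).
  assert (h2 : e / 2 <= exp (e ^ 2 / 4)) by (pose proof (exp_ineq1_le (e^2/4)); nra).
  assert (h3 : exp (- (e ^ 2 / 4)) <= 2 / e).
  { rewrite exp_Ropp. replace (2 / e) with (/ (e / 2)) by (field; lra).
    apply Rinv_le_contravar; lra. }
  assert (0 < e ^ 2) by nra.
  apply Rle_trans with ((2 / e) / (2 * e ^ 2)).
  { unfold Rdiv. apply Rmult_le_compat_r. apply Rlt_le, Rinv_0_lt_compat; lra. lra. }
  right; field; lra.
Qed.

Definition qq := 1 / (3 * sqrt 3).

Lemma qq_facts : qq ^ 2 = 1 / 27 /\ 0.1924 < qq < 0.1925.
Proof.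
  assert (H3 : sqrt 3 * sqrt 3 = 3) by (apply sqrt_sqrt; lra).
  assert (Hp : 0 < sqrt 3) by (apply sqrt_lt_R0; lra).
  assert (E : qq ^ 2 = 1 / 27) by (unfold qq; replace ((1 / (3 * sqrt 3)) ^ 2) with (1 / (9 * (sqrt 3 * sqrt 3))) by (field; lra); rewrite H3; field).
  assert (0 < qq) by (unfold qq; apply Rdiv_lt_0_compat; lra).
  split; auto. split; nra.
Qed.

Lemma sqrtN_facts N lo hi : 0 < lo -> lo <= N <= hi ->
  sqrt lo <= sqrt N <= sqrt hi /\ 0 < sqrt N.
Proof. intros Hl [H1 H2]. split. split; apply sqrt_le_1_alt; lra. apply sqrt_lt_R0; lra. Qed.

Lemma seg2_R gam e B x N T : 1000 <= e -> Rabs (2 - gam) <= e -> 0 <= B <= e / 2 ->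
  qq <= x <= 1 - qq -> N = x ^ 2 + (- (1/3)) ^ 2 -> T = / sqrt N ->
  exp ((2 - gam) * ln (sqrt N) + B * (1 + T + 2 * T ^ 2) - 2 * e ^ 2 * (x / N - 1))
    * (Rabs (2 - gam) * T + B * (T ^ 2 + 4 * T ^ 3)) / (2 * e ^ 2)
  <= 1250 * (3 * Rabs (2 - gam) + 59) / e ^ 3.
Proof.
  intros He Hg HB Hx HN HT. set (gm := Rabs (2 - gam)) in *.
  assert (Hgm : 0 <= gm) by apply Rabs_pos.
  destruct qq_facts as [Hq2 Hq].
  assert (HN1 : 1/9 <= N <= 1) by (subst N; nra).
  destruct (sqrtN_facts N (1/9) 1 ltac:(lra) HN1) as [[Hs1 Hs2] Hs0].
  rewrite sqrt_1 in Hs2.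
  replace (sqrt (1/9)) with (1/3) in Hs1 by (symmetry; apply sqrt_lem_1; lra).
  assert (HT1 : 1 <= T <= 3).
  { subst T. split.
    - apply Rle_trans with (/ 1). lra. apply Rinv_le_contravar; lra.
    - apply Rle_trans with (/ (1/3)). apply Rinv_le_contravar; lra. lra. }
  assert (Hln : - 2 <= ln (sqrt N) <= 0).
  { split.
    - assert (ln T <= T - 1) by (apply ln_le_xm1; lra).
      subst T. rewrite ln_Rinv in H by lra. lra.
    - pose proof (ln_le_xm1 (sqrt N) Hs0). lra. }
  assert (h1 : (2 - gam) * ln (sqrt N) <= 2 * e).
  { eapply Rle_trans. apply abs_mul_le. assert (Rabs (ln (sqrt N)) <= 2) by (apply Rabs_le; lra).
    fold gm. nra. }
  assert (h2 : B * (1 + T + 2 * T ^ 2) <= 11 * e).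
  { assert (1 + T + 2 * T ^ 2 <= 22) by nra. nra. }
  assert (h3 : x / N - 1 >= x - N).
  { assert (x - N >= 0) by (subst N; nra).
    replace (x / N - 1) with ((x - N) / N) by (field; lra).
    apply Rle_ge. apply Rmult_le_reg_r with N. lra. unfold Rdiv. rewrite Rmult_assoc, Rinv_l by lra. nra. }
  assert (h4 : x - N >= 0.044) by (subst N; nra).
  set (Ex := (2 - gam) * ln (sqrt N) + B * (1 + T + 2 * T ^ 2) - 2 * e ^ 2 * (x / N - 1)).
  assert (hE : Ex <= - ((1/25) * e ^ 2)).
  { unfold Ex. assert (2 * e ^ 2 * (x / N - 1) >= 2 * e ^ 2 * 0.044) by (apply Rle_ge, Rmult_le_compat_l; nra).
    nra. }
  assert (f1 : gm * T + B * (T ^ 2 + 4 * T ^ 3) <= (3 * gm + 59) * e).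
  { assert (T ^ 2 + 4 * T ^ 3 <= 117) by nra.
    assert (B * (T ^ 2 + 4 * T ^ 3) <= (e / 2) * 117) by (apply Rmult_le_compat; nra).
    assert (gm * T <= gm * 3) by (apply Rmult_le_compat_l; lra). nra. }
  assert (f4 : exp (- ((1/25) * e ^ 2)) <= 4 / ((1/25) ^ 2 * e ^ 4)) by (apply exp_neg_bound; lra).
  assert (f5 : exp Ex <= 2500 / e ^ 4).
  { eapply Rle_trans. apply exp_le'. exact hE. eapply Rle_trans. exact f4. right; field; lra. }
  assert (0 < e ^ 4) by (apply pow_lt; lra).
  assert (0 <= gm * T + B * (T ^ 2 + 4 * T ^ 3)) by (apply Rplus_le_le_0_compat; apply Rmult_le_pos; nra).
  apply Rle_trans with (2500 / e ^ 4 * ((3 * gm + 59) * e) / (2 * e ^ 2)).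
  { unfold Rdiv. apply Rmult_le_compat_r. apply Rlt_le, Rinv_0_lt_compat; nra.
    apply Rmult_le_compat; try lra. left; apply exp_pos. }
  replace (2500 / e ^ 4 * ((3 * gm + 59) * e) / (2 * e ^ 2)) with (1250 * (3 * gm + 59) / e ^ 3 / e ^ 2) by (field; lra).
  assert (0 < 1250 * (3 * gm + 59) / e ^ 3) by (apply Rdiv_lt_0_compat; [nra | apply pow_lt; lra]).
  assert (1 <= e ^ 2) by nra.
  apply Rmult_le_reg_r with (e ^ 2). nra.
  unfold Rdiv at 1. rewrite Rmult_assoc, Rinv_l by lra. nra.
Qed.

Lemma seg3_R gam e B u x y N T W : 1000 <= e -> Rabs (2 - gam) <= e -> 0 <= B <= e / 2 ->
  0 <= u <= 1 -> x = 1 - u * qq -> y = - (u / 3) -> N = x ^ 2 + y ^ 2 -> T = / sqrt N ->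
  0 <= W <= 6 * qq * u * T ^ 2 ->
  (2 - gam) * ln (sqrt N) + B * W - 2 * e ^ 2 * (x / N - 1) <= Rabs (2 - gam) - (e ^ 2 / 25) * u
  /\ Rabs (2 - gam) * T + B * (T ^ 2 + 4 * T ^ 3) <= 2 * Rabs (2 - gam) + 6 * e.
Proof.
  intros He Hg HB Hu Hx Hy HN HT HW. set (gm := Rabs (2 - gam)) in *.
  assert (Hgm : 0 <= gm) by apply Rabs_pos.
  destruct qq_facts as [Hq2 Hq].
  assert (HNe : N = 1 - 2 * u * qq + u ^ 2 * (qq ^ 2 + 1/9)) by (subst; field).
  rewrite Hq2 in HNe.
  assert (HN1 : 3/5 <= N <= 1) by (rewrite HNe; nra).
  destruct (sqrtN_facts N (3/5) 1 ltac:(lra) HN1) as [[Hs1 Hs2] Hs0].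
  rewrite sqrt_1 in Hs2.
  assert (Hs35 : 3/4 <= sqrt (3/5)).
  { apply Rsqr_incr_0_var. rewrite Rsqr_sqrt by lra. unfold Rsqr; lra. apply sqrt_pos. }
  assert (HT1 : 1 <= T <= 4/3).
  { subst T. split.
    - apply Rle_trans with (/ 1). lra. apply Rinv_le_contravar; lra.
    - apply Rle_trans with (/ (3/4)). apply Rinv_le_contravar; lra. lra. }
  assert (HT2 : T ^ 2 <= 5/3).
  { subst T. rewrite pow_inv. replace (sqrt N ^ 2) with N. apply Rle_trans with (/(3/5)).
    apply Rinv_le_contravar; lra. lra. rewrite <- Rsqr_pow2, Rsqr_sqrt; lra. }
  assert (Hln : - 1 <= ln (sqrt N) <= 0).
  { split.
    - assert (ln T <= T - 1) by (apply ln_le_xm1; lra).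
      subst T. rewrite ln_Rinv in H by lra. lra.
    - pose proof (ln_le_xm1 (sqrt N) Hs0). lra. }
  split.
  - assert (h1 : (2 - gam) * ln (sqrt N) <= gm).
    { eapply Rle_trans. apply abs_mul_le. assert (Rabs (ln (sqrt N)) <= 1) by (apply Rabs_le; lra).
      fold gm. nra. }
    assert (h2 : B * W <= e * u).
    { assert (W <= 6 * 0.1925 * u * (5/3)).
      { eapply Rle_trans. apply HW. assert (0 <= u * T ^ 2) by nra. nra. }
      nra. }
    assert (h3 : x / N - 1 >= x - N).
    { assert (x - N >= 0) by (rewrite HNe, Hx; nra).
      replace (x / N - 1) with ((x - N) / N) by (field; lra).
      apply Rle_ge. apply Rmult_le_reg_r with N. lra. unfold Rdiv. rewrite Rmult_assoc, Rinv_l by lra. nra. }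
    assert (h4 : x - N >= 0.044 * u) by (rewrite HNe, Hx; nra).
    assert (2 * e ^ 2 * (x / N - 1) >= 2 * e ^ 2 * (0.044 * u)) by (apply Rle_ge, Rmult_le_compat_l; nra).
    assert (e * u <= (0.048 * e) * e * u).
    { assert (e * u * 1 <= e * u * (0.048 * e)) by (apply Rmult_le_compat_l; nra). nra. }
    nra.
  - assert (T ^ 3 <= 64/27) by (assert (T^3 = T * T^2) by ring; nra).
    assert (T ^ 2 + 4 * T ^ 3 <= 12) by nra.
    assert (B * (T ^ 2 + 4 * T ^ 3) <= (e / 2) * 12) by (apply Rmult_le_compat; nra).
    assert (gm * T <= gm * 2) by (apply Rmult_le_compat_l; lra). nra.
Qed.

Lemma cmp_int M c : 0 < c -> is_RInt (fun s => M * exp (- (c * (1 - s)))) 0 1 (M * (1 - exp (- c)) / c).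
Proof. intro Hc.
  replace (M * (1 - exp (- c)) / c) with
    (minus (M * exp (- (c * (1 - 1))) / c) (M * exp (- (c * (1 - 0))) / c)).
  2: { unfold minus, plus, opp; simpl. replace (c * (1 - 1)) with 0 by ring. rewrite Ropp_0, exp_0.
       replace (c * (1 - 0)) with c by ring. field. lra. }
  apply (is_RInt_derive (fun s => M * exp (- (c * (1 - s))) / c)).
  - intros x _. auto_derive. auto. unfold Rminus. field. lra.
  - intros x _. apply (ex_derive_continuous (fun s => M * exp (- (c * (1 - s))))). auto_derive. auto.
Qed.

Lemma OmP1_eq : OmP1 = (qq, - (1/3)).
Proof. reflexivity. Qed.
Lemma OmP2_eq : OmP2 = (1 - qq, - (1/3)).
Proof. reflexivity. Qed.

Lemma aff1 s : aff (RtoC 0) (Cminus OmP1 (RtoC 0)) s = (s * qq, - (s / 3)).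
Proof. unfold aff. rewrite OmP1_eq. apply injective_projections; simpl; field. Qed.
Lemma aff2 s : aff OmP1 (Cminus OmP2 OmP1) s = (qq + s * (1 - 2 * qq), - (1 / 3)).
Proof. unfold aff. rewrite OmP1_eq, OmP2_eq. apply injective_projections; simpl; field. Qed.
Lemma aff3 s : aff OmP2 (Cminus (RtoC 1) OmP2) s = (1 - (1 - s) * qq, - ((1 - s) / 3)).
Proof. unfold aff. rewrite OmP2_eq. apply injective_projections; simpl; field. Qed.

Lemma aff_1 p q : aff p (Cminus q p) 1 = q.
Proof. unfold aff. apply injective_projections; simpl; ring. Qed.
Lemma aff_0 p q : aff p (Cminus q p) 0 = p.
Proof. unfold aff. apply injective_projections; simpl; ring. Qed.

Lemma Cmod_pair x y : Cmod (x, y) = sqrt (x ^ 2 + y ^ 2).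
Proof. reflexivity. Qed.

Lemma Cmod_aff1 s : 0 <= s -> Cmod (s * qq, - (s / 3)) = 2 * qq * s.
Proof. intro Hs. destruct qq_facts as [Hq2 Hq]. rewrite Cmod_pair.
  replace ((s * qq) ^ 2 + (- (s / 3)) ^ 2) with ((2 * qq * s) ^ 2).
  apply sqrt_pow2. nra.
  replace ((- (s / 3)) ^ 2) with (s ^ 2 * (1/9)) by field.
  replace (1/9) with (3 * qq ^ 2) by (rewrite Hq2; field). ring. Qed.

Lemma Phi_1 a gam k : cexp (Phi a gam k (RtoC 1)) = RtoC 1.
Proof.
  assert (Hi : Cinv (RtoC 1) = RtoC 1) by (apply injective_projections; simpl; field).
  assert (HL : Lg (RtoC 1) = RtoC 0).
  { unfold Lg. cbn [fst snd RtoC]. replace (1 ^ 2 + 0 ^ 2) with 1 by ring. rewrite ln_1.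
    replace (0 / 1) with 0 by field. rewrite atan_0. apply injective_projections; simpl; field. }
  assert (HP : Phi a gam k (RtoC 1) = RtoC 0).
  { unfold Phi, Ep. rewrite Hi, HL, RtoC2. ring. }
  rewrite HP. unfold cexp, Re, Im. cbn [fst snd RtoC]. rewrite exp_0, cos_0, sin_0.
  apply injective_projections; simpl; ring.
Qed.

Lemma E_pt a gam k t : t <> RtoC 0 ->
  Cmod (cexp (Phi a gam k t)) <= exp ((2 - gam) * ln (Cmod t) + Cmod (bb a) * Cmod (ww t) - k * (fst (Cinv t) - 1)).
Proof. intro Ht. rewrite Cmod_cexp. apply exp_le'. rewrite <- fst_Lg by auto. apply fst_Phi_le. Qed.

Lemma R0_pt a gam k t : 0 < k -> t <> RtoC 0 ->
  Cmod (R0 a gam k t) <= exp ((2 - gam) * ln (Cmod t) + Cmod (bb a) * Cmod (ww t) - k * (fst (Cinv t) - 1))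
     * (Rabs (2 - gam) * / Cmod t + Cmod (bb a) * ((/ Cmod t) ^ 2 + 4 * (/ Cmod t) ^ 3)) / k.
Proof. intros Hk Ht. rewrite Cmod_R0 by auto. unfold Rdiv. apply Rmult_le_compat_r.
  apply Rlt_le, Rinv_0_lt_compat; auto.
  apply Rmult_le_compat. left; apply exp_pos. apply Cmod_ge_0.
  rewrite <- Cmod_cexp. apply E_pt; auto. apply Cmod_Qf_le; auto. Qed.

Lemma seg_val f rho p q V :
  is_RInt (fun s => if Rlt_dec rho (Cmod (aff p (Cminus q p) s)) then f (aff p (Cminus q p) s) else RtoC 0) 0 1 V ->
  seg_int_outside f rho p q = Cmult (Cminus q p) V.
Proof. intro H. unfold seg_int_outside. f_equal. apply (is_RInt_unique (V := C_R_CompleteNormedModule)). exact H. Qed.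

Definition ifn a eta lam gam rho p q (s : R) : C :=
  if Rlt_dec rho (Cmod (aff p (Cminus q p) s)) then integ a eta lam gam (aff p (Cminus q p) s) else RtoC 0.

Lemma k_ne0 eta : eta <> 0 -> 2 * eta ^ 2 <> 0.
Proof. intro. assert (0 < eta ^ 2) by (apply pow2_gt_0; auto). lra. Qed.

Lemma seg_part a eta lam gam rho p q s0 : a <> RtoC 0 -> eta <> 0 -> Cminus q p <> RtoC 0 ->
  0 <= s0 <= 1 ->
  (forall s, 0 < s < s0 -> ~ rho < Cmod (aff p (Cminus q p) s)) ->
  (forall s, s0 <= s <= 1 -> 0 < fst (aff p (Cminus q p) s)) ->
  (forall s, s0 < s < 1 -> rho < Cmod (aff p (Cminus q p) s)) ->
  is_RInt (ifn a eta lam gam rho p q) 0 1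
    (Cminus (Cminus (Psi a gam (2 * eta ^ 2) p (Cminus q p) 1) (Psi a gam (2 * eta ^ 2) p (Cminus q p) s0))
       (RInt (V := C_R_CompleteNormedModule) (fun s => R0 a gam (2 * eta ^ 2) (aff p (Cminus q p) s)) s0 1)).
Proof.
  intros Ha He Hd Hs0 Hout Hpos Hin.
  set (V := Cminus (Cminus (Psi a gam (2 * eta ^ 2) p (Cminus q p) 1) (Psi a gam (2 * eta ^ 2) p (Cminus q p) s0))
       (RInt (V := C_R_CompleteNormedModule) (fun s => R0 a gam (2 * eta ^ 2) (aff p (Cminus q p) s)) s0 1)).
  replace V with (plus (RtoC 0) V) by (apply (plus_zero_l (G := C_R_CompleteNormedModule))).
  apply (is_RInt_Chasles (V := C_R_CompleteNormedModule) _ 0 s0 1).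
  - apply (is_RInt_ext (V := C_R_CompleteNormedModule) (fun _ => RtoC 0)).
    { intros x Hx. rewrite Rmin_left, Rmax_right in Hx by lra. unfold ifn.
      destruct (Rlt_dec rho _) as [r|r]; auto. exfalso; apply (Hout x); auto. }
    pose proof (is_RInt_const (V := C_R_CompleteNormedModule) 0 s0 (RtoC 0)) as Hc.
    rewrite (scal_zero_r (V := C_R_CompleteNormedModule)) in Hc. exact Hc.
  - unfold V. apply seg_int. lra. auto. apply k_ne0; auto. auto.
    intros s Hs. unfold ifn. destruct (Rlt_dec rho _) as [r|r].
    + apply integ_eq; auto. apply Hpos; lra.
    + exfalso; apply r; apply Hin; auto.
Qed.

Lemma RInt_bound_const (f : R -> C) lo hi K : lo <= hi ->
  ex_RInt (V := C_R_CompleteNormedModule) f lo hi ->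
  (forall s, lo <= s <= hi -> Cmod (f s) <= K) ->
  Cmod (RInt (V := C_R_CompleteNormedModule) f lo hi) <= (hi - lo) * K.
Proof. intros Hl Hf Hb. apply (RInt_bound f (fun _ => K) lo hi); auto.
  apply (is_RInt_const (V := R_NormedModule)). Qed.

Lemma Cinv_fst x y : fst (Cinv (x, y)) = x / (x ^ 2 + y ^ 2).
Proof. reflexivity. Qed.

Lemma pair_ne0 x y : 0 < x -> (x, y) <> RtoC 0.
Proof. intros H E. apply (f_equal fst) in E. simpl in E. lra. Qed.

Lemma J2_bound a gam e : 1000 <= e -> Rabs (2 - gam) <= e -> Cmod (bb a) <= e / 2 ->
  Cmod (RInt (V := C_R_CompleteNormedModule) (fun s => R0 a gam (2 * e ^ 2) (aff OmP1 (Cminus OmP2 OmP1) s)) 0 1)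
    <= 1250 * (3 * Rabs (2 - gam) + 59) / e ^ 3.
Proof.
  intros He Hg HB. destruct qq_facts as [Hq2 Hq].
  replace (1250 * (3 * Rabs (2 - gam) + 59) / e ^ 3) with ((1 - 0) * (1250 * (3 * Rabs (2 - gam) + 59) / e ^ 3)) by ring.
  apply RInt_bound_const. lra.
  { apply ex_RInt_R0. lra. intros s Hs. rewrite aff2. simpl. nra. }
  intros s Hs. rewrite aff2. set (x := qq + s * (1 - 2 * qq)).
  assert (Hx : qq <= x <= 1 - qq) by (unfold x; nra).
  assert (Ht : (x, - (1/3)) <> RtoC 0) by (apply pair_ne0; lra).
  assert (Hk : 0 < 2 * e ^ 2) by nra.
  eapply Rle_trans. apply R0_pt; auto.
  rewrite Cinv_fst, Cmod_pair.
  set (N := x ^ 2 + (- (1/3)) ^ 2). set (T := / sqrt N).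
  assert (HB0 : 0 <= Cmod (bb a)) by apply Cmod_ge_0.
  eapply Rle_trans; [| apply (seg2_R gam e (Cmod (bb a)) x N T); auto; lra].
  unfold Rdiv. apply Rmult_le_compat_r. apply Rlt_le, Rinv_0_lt_compat; auto.
  apply Rmult_le_compat_r.
  { apply Rplus_le_le_0_compat. apply Rmult_le_pos. apply Rabs_pos. unfold T. apply Rlt_le, Rinv_0_lt_compat.
    apply sqrt_lt_R0. unfold N. nra. apply Rmult_le_pos; auto.
    assert (0 <= T) by (unfold T; apply Rlt_le, Rinv_0_lt_compat; apply sqrt_lt_R0; unfold N; nra). nra. }
  apply exp_le'.
  pose proof (Cmod_ww_le _ Ht) as Hw. rewrite Cmod_pair in Hw. fold N T in Hw.
  assert (Cmod (bb a) * Cmod (ww (x, - (1 / 3))) <= Cmod (bb a) * (1 + T + 2 * T ^ 2)) by (apply Rmult_le_compat_l; auto).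
  unfold Rdiv. lra.
Qed.

Lemma J3_bound a gam e : 1000 <= e -> Rabs (2 - gam) <= e -> Cmod (bb a) <= e / 2 ->
  Cmod (RInt (V := C_R_CompleteNormedModule) (fun s => R0 a gam (2 * e ^ 2) (aff OmP2 (Cminus (RtoC 1) OmP2) s)) 0 1)
    <= 13 * exp (Rabs (2 - gam)) * (2 * Rabs (2 - gam) + 6) / e ^ 3.
Proof.
  intros He Hg HB. destruct qq_facts as [Hq2 Hq]. set (gm := Rabs (2 - gam)) in *.
  assert (Hgm : 0 <= gm) by apply Rabs_pos.
  set (c := e ^ 2 / 25). assert (Hc : 0 < c) by (unfold c; nra).
  set (M := exp gm * (2 * gm + 6 * e) / (2 * e ^ 2)).
  assert (HM : 0 <= M) by (unfold M; apply Rmult_le_pos; [apply Rmult_le_pos; [left; apply exp_pos| lra] | apply Rlt_le, Rinv_0_lt_compat; nra]).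
  apply Rle_trans with (M * (1 - exp (- c)) / c).
  apply (RInt_bound _ (fun s => M * exp (- (c * (1 - s)))) 0 1). lra.
  { apply ex_RInt_R0. lra. intros s Hs. rewrite aff3. simpl. nra. }
  2: { apply cmp_int; auto. }
  - intros s Hs. rewrite aff3. set (u := 1 - s). assert (Hu : 0 <= u <= 1) by (unfold u; lra).
    set (x := 1 - u * qq). set (y := - (u / 3)).
    assert (Hx : 0 < x) by (unfold x; nra).
    assert (Ht : (x, y) <> RtoC 0) by (apply pair_ne0; lra).
    assert (Hk : 0 < 2 * e ^ 2) by nra.
    eapply Rle_trans. apply R0_pt; auto.
    rewrite Cinv_fst, Cmod_pair.
    set (N := x ^ 2 + y ^ 2). set (T := / sqrt N).
    assert (HN0 : 0 < N) by (unfold N; nra).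
    assert (HT0 : 0 < T) by (unfold T; apply Rinv_0_lt_compat, sqrt_lt_R0; auto).
    set (W := Cmod (ww (x, y))).
    assert (HW : 0 <= W <= 6 * qq * u * T ^ 2).
    { split. apply Cmod_ge_0. unfold W. rewrite ww_fact by auto.
      rewrite !Cmod_mult, !Cmod_inv by auto. rewrite Cmod_pair. fold N T.
      assert (E1 : Cminus (x, y) (RtoC 1) = (- (u * qq), - (u / 3))) by (apply injective_projections; simpl; unfold x, y; ring).
      assert (E2 : Cplus (x, y) (RtoC 2) = (3 - u * qq, - (u / 3))) by (apply injective_projections; simpl; unfold x, y; ring).
      rewrite E1, E2, !Cmod_pair.
      replace ((- (u * qq)) ^ 2 + (- (u / 3)) ^ 2) with ((2 * qq * u) ^ 2)
        by (replace ((- (u / 3)) ^ 2) with (u ^ 2 * (1/9)) by field; replace (1/9) with (3 * qq ^ 2) by (rewrite Hq2; field); ring).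
      rewrite sqrt_pow2 by nra.
      assert (sqrt ((3 - u * qq) ^ 2 + (- (u / 3)) ^ 2) <= 3).
      { assert (S9 : sqrt 9 = 3) by (replace 9 with (3 ^ 2) by ring; apply sqrt_pow2; lra).
        apply Rle_trans with (sqrt 9); [| rewrite S9; lra]. apply sqrt_le_1_alt.
        replace ((- (u / 3)) ^ 2) with (u ^ 2 * (1/9)) by field. replace (1/9) with (3 * qq ^ 2) by (rewrite Hq2; field).
        assert (Huq : 0 <= u * qq <= 1) by (split; nra).
        assert (0 <= u * qq * (6 - 4 * (u * qq))) by (apply Rmult_le_pos; lra). nra. }
      assert (0 <= sqrt ((3 - u * qq) ^ 2 + (- (u / 3)) ^ 2)) by apply sqrt_pos.
      assert (0 <= 2 * qq * u) by nra.
      assert (2 * qq * u * sqrt ((3 - u * qq) ^ 2 + (- (u / 3)) ^ 2) <= 2 * qq * u * 3) by (apply Rmult_le_compat_l; auto).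
      assert (0 <= T * T) by nra.
      replace (T ^ 2) with (T * T) by ring. nra. }
    destruct (seg3_R gam e (Cmod (bb a)) u x y N T W He Hg ltac:(split; [apply Cmod_ge_0| auto]) Hu eq_refl eq_refl eq_refl eq_refl HW) as [S1 S2].
    fold gm in S1, S2.
    unfold Rdiv.
    apply Rle_trans with (exp (gm - e ^ 2 / 25 * u) * (2 * gm + 6 * e) * / (2 * e ^ 2)).
    { apply Rmult_le_compat_r. apply Rlt_le, Rinv_0_lt_compat; auto.
      apply Rmult_le_compat. left; apply exp_pos.
      apply Rplus_le_le_0_compat. apply Rmult_le_pos; auto; lra. apply Rmult_le_pos. apply Cmod_ge_0. nra.
      apply exp_le'. unfold Rdiv in S1. exact S1. exact S2. }
    right. unfold M. replace (gm - e ^ 2 / 25 * u) with (gm + - (c * (1 - s))) by (unfold c, u; field).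
    rewrite exp_plus. unfold u, c, Rdiv. ring.
  - assert (0 < exp (- c)) by apply exp_pos.
    apply Rle_trans with (M / c). unfold Rdiv. apply Rmult_le_compat_r. apply Rlt_le, Rinv_0_lt_compat; auto. nra.
    unfold M, c. assert (0 < exp gm) by apply exp_pos.
    assert (0 < e ^ 3) by (apply pow_lt; lra).
    replace (exp gm * (2 * gm + 6 * e) / (2 * e ^ 2) / (e ^ 2 / 25)) with (exp gm * (25 * (2 * gm + 6 * e) / (2 * e)) / e ^ 3) by (field; lra).
    assert (HX : 25 * (2 * gm + 6 * e) / (2 * e) <= 13 * (2 * gm + 6)).
    { apply Rmult_le_reg_r with (2 * e). lra. unfold Rdiv. rewrite Rmult_assoc, Rinv_l by lra. nra. }
    unfold Rdiv. apply Rmult_le_compat_r. apply Rlt_le, Rinv_0_lt_compat; auto.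
    unfold Rdiv in HX. nra.
Qed.

Lemma seg1_point a gam e s0 s : 1000 <= e -> Rabs (2 - gam) <= e -> Cmod (bb a) <= e / 2 ->
  0 < s0 -> / (2 * qq * s0) <= e / 25 -> s0 <= s <= 1 ->
  let t := (s * qq, - (s / 3)) in
  let T := / Cmod t in
  5/2 <= T /\
  (2 - gam) * ln (Cmod t) + Cmod (bb a) * Cmod (ww t) - 2 * e ^ 2 * (fst (Cinv t) - 1) <= - (e ^ 2 / 10) * T.
Proof.
  intros He Hg HB Hs0 Hr Hs t T. destruct qq_facts as [Hq2 Hq].
  assert (Hct : Cmod t = 2 * qq * s) by (apply Cmod_aff1; lra).
  assert (Ht : t <> RtoC 0) by (apply pair_ne0; nra).
  assert (HT : T = / (2 * qq * s)) by (unfold T; rewrite Hct; auto).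
  assert (HT1 : 5/2 <= T).
  { rewrite HT. apply Rle_trans with (/ (2 * qq)). apply Rmult_le_reg_r with (2 * qq). nra.
    rewrite Rinv_l by nra. nra. apply Rinv_le_contravar; nra. }
  assert (HT2 : T <= e / 25).
  { eapply Rle_trans; [| exact Hr]. rewrite HT. apply Rinv_le_contravar; nra. }
  split; auto.
  assert (HB0 : 0 <= Cmod (bb a)) by apply Cmod_ge_0.
  eapply Rle_trans; [| apply (seg1_exp gam e (Cmod (bb a)) T); auto; lra].
  assert (E1 : ln (Cmod t) = - ln T) by (unfold T; rewrite ln_Rinv; [ring | rewrite Hct; nra]).
  assert (E2 : fst (Cinv t) = T / 2).
  { unfold t. rewrite Cinv_fst, HT. replace ((- (s / 3)) ^ 2) with (s ^ 2 * (1/9)) by field.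
    replace (1/9) with (3 * qq ^ 2) by (rewrite Hq2; field). field. split; nra. }
  rewrite E1, E2.
  pose proof (Cmod_ww_le t Ht) as Hw. fold T in Hw.
  assert (Cmod (bb a) * Cmod (ww t) <= Cmod (bb a) * (1 + T + 2 * T ^ 2)) by (apply Rmult_le_compat_l; auto).
  lra.
Qed.

Lemma J1_bound a gam e s0 : 1000 <= e -> Rabs (2 - gam) <= e -> Cmod (bb a) <= e / 2 ->
  0 < s0 <= 1 -> / (2 * qq * s0) <= e / 25 ->
  Cmod (RInt (V := C_R_CompleteNormedModule) (fun s => R0 a gam (2 * e ^ 2) (aff (RtoC 0) (Cminus OmP1 (RtoC 0)) s)) s0 1)
    <= 3500 * (Rabs (2 - gam) + 3) / e ^ 3.
Proof.
  intros He Hg HB Hs0 Hr. destruct qq_facts as [Hq2 Hq].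
  assert (HK : 0 <= 3500 * (Rabs (2 - gam) + 3) / e ^ 3).
  { apply Rmult_le_pos. pose proof (Rabs_pos (2 - gam)); lra. apply Rlt_le, Rinv_0_lt_compat, pow_lt; lra. }
  apply Rle_trans with ((1 - s0) * (3500 * (Rabs (2 - gam) + 3) / e ^ 3)).
  2: { assert (0 <= s0 * (3500 * (Rabs (2 - gam) + 3) / e ^ 3)) by (apply Rmult_le_pos; lra). nra. }
  apply RInt_bound_const. lra.
  { apply ex_RInt_R0. lra. intros s Hs. rewrite aff1. simpl. nra. }
  intros s Hs. rewrite aff1.
  destruct (seg1_point a gam e s0 s He Hg HB ltac:(lra) Hr Hs) as [HT HE].
  set (t := (s * qq, - (s / 3))) in *.
  assert (Ht : t <> RtoC 0) by (apply pair_ne0; nra).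
  assert (Hk : 0 < 2 * e ^ 2) by nra.
  eapply Rle_trans. apply R0_pt; auto.
  apply seg1_R0 with (T := / Cmod t); auto.
  split; [apply Cmod_ge_0 | auto].
Qed.

Lemma bdry_bound a gam e s0 : 1000 <= e -> Rabs (2 - gam) <= e -> Cmod (bb a) <= e / 2 ->
  0 < s0 <= 1 -> / (2 * qq * s0) <= e / 25 ->
  Cmod (cexp (Phi a gam (2 * e ^ 2) (aff (RtoC 0) (Cminus OmP1 (RtoC 0)) s0))) / (2 * e ^ 2) <= 1 / e ^ 3.
Proof.
  intros He Hg HB Hs0 Hr. destruct qq_facts as [Hq2 Hq].
  rewrite aff1.
  destruct (seg1_point a gam e s0 s0 He Hg HB ltac:(lra) Hr ltac:(lra)) as [HT HE].
  set (t := (s0 * qq, - (s0 / 3))) in *.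
  assert (Ht : t <> RtoC 0) by (apply pair_ne0; nra).
  apply Rle_trans with (exp ((2 - gam) * ln (Cmod t) + Cmod (bb a) * Cmod (ww t) - 2 * e ^ 2 * (fst (Cinv t) - 1)) / (2 * e ^ 2)).
  { unfold Rdiv. apply Rmult_le_compat_r. apply Rlt_le, Rinv_0_lt_compat; nra. apply E_pt; auto. }
  apply bdry_R with (T := / Cmod t); auto. lra.
Qed.

Lemma Cmod_le1 x y : x ^ 2 + y ^ 2 <= 1 -> Cmod (x, y) <= 1.
Proof. intro H. rewrite Cmod_pair. rewrite <- sqrt_1. apply sqrt_le_1_alt. exact H. Qed.

Lemma Cmod_ge_fst x y : 0 <= x -> x <= Cmod (x, y).
Proof. intro H. rewrite Cmod_pair. rewrite <- (sqrt_pow2 x H) at 1. apply sqrt_le_1_alt.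
  pose proof (pow2_ge_0 y). lra. Qed.

Lemma Cmod_gt13 x : 0 < x -> 1/3 < Cmod (x, - (1/3)).
Proof. intro H. rewrite Cmod_pair.
  assert (E : sqrt ((1/3) ^ 2) = 1/3) by (apply sqrt_pow2; lra).
  rewrite <- E at 1. apply sqrt_lt_1_alt. split. apply pow2_ge_0.
  assert (0 < x ^ 2) by (apply pow2_gt_0; lra). nra. Qed.

Lemma Cmod_minus_le x y : Cmod (Cminus x y) <= Cmod x + Cmod y.
Proof. unfold Cminus. eapply Rle_trans. apply Cmod_triangle. rewrite Cmod_opp. lra. Qed.

Theorem lemma3p6 :
  exists C1 : R, forall Cst : R, C1 <= Cst ->
  forall (C0 : R), 0 < C0 -> forall gamma : R,
  exists (K eta0 : R), 0 < K /\
  forall (eta : R), eta0 <= Rabs eta ->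
  forall (lam : R), / C0 <= lam <= C0 ->
  forall (a : C), in_Lambda a -> Rpower (Rabs eta) (- (1 / 2)) < Cmod a ->
    Cmod (Cminus
      (Omega_int_outside
         (fun tau : C =>
            Cmult (cpow_pr tau (RtoC (- gamma)))
                  (cexp (Cminus (gfrak a (RtoC 1) eta lam) (gfrak a tau eta lam))))
         (Cst * Rpower (Rabs eta) (- (1 / 2))))
      (RtoC (1 / (2 * eta ^ 2))))
    <= K * Rpower (Rabs eta) (-3).
Proof.
  exists 1. intros Cst HC C0 HC0 gamma.
  set (gm := Rabs (2 - gamma)).
  assert (Hgm : 0 <= gm) by apply Rabs_pos.
  assert (Hexg : 0 < exp gm) by apply exp_pos.
  set (K := 1 + 3500 * (gm + 3) + 1250 * (3 * gm + 59) + 13 * exp gm * (2 * gm + 6)).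
  exists K, (1000 + gm + (25 / Cst) ^ 2 + (3 * Cst) ^ 2).
  split. { unfold K. assert (0 <= 13 * exp gm * (2 * gm + 6)) by (apply Rmult_le_pos; nra). nra. }
  intros eta Heta lam Hlam a _ Ha.
  set (e := Rabs eta) in *.
  destruct qq_facts as [Hq2 Hq].
  assert (P1 : 0 <= (25 / Cst) ^ 2) by apply pow2_ge_0.
  assert (P2 : 0 <= (3 * Cst) ^ 2) by apply pow2_ge_0.
  assert (He : 1000 <= e) by lra.
  assert (Hge : gm <= e) by lra.
  assert (He0 : 0 < e) by lra.
  assert (Heta0 : eta <> 0) by (intro E0; unfold e in He; rewrite E0, Rabs_R0 in He; lra).
  set (sq := sqrt e).
  assert (Hsq0 : 0 < sq) by (apply sqrt_lt_R0; lra).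
  assert (Hsqsq : sq * sq = e) by (apply sqrt_sqrt; lra).
  assert (Hsq1 : 25 / Cst <= sq).
  { unfold sq. rewrite <- (sqrt_pow2 (25 / Cst)) by (apply Rlt_le, Rdiv_lt_0_compat; lra).
    apply sqrt_le_1_alt. lra. }
  assert (Hsq2 : 3 * Cst <= sq).
  { unfold sq. rewrite <- (sqrt_pow2 (3 * Cst)) by lra. apply sqrt_le_1_alt. lra. }
  assert (Hrp : Rpower e (- (1 / 2)) = / sq).
  { rewrite Rpower_Ropp. replace (1 / 2) with (/ 2) by field. rewrite Rpower_sqrt by lra. reflexivity. }
  assert (Hr3 : Rpower e (- 3) = / e ^ 3).
  { replace (-3) with (- (3)) by ring. rewrite Rpower_Ropp. replace 3 with (INR 3) at 1 by (simpl; ring). rewrite Rpower_pow by lra. reflexivity. }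
  rewrite Hrp in Ha |- *. rewrite Hr3.
  assert (Hinv : 0 < / sq) by (apply Rinv_0_lt_compat; lra).
  assert (Ha0 : a <> RtoC 0) by (apply Cmod_gt_0; lra).
  assert (HB : Cmod (bb a) <= e / 2).
  { rewrite Cmod_bb by auto.
    assert (H2 : / e < Cmod a ^ 2).
    { rewrite <- Hsqsq. rewrite Rinv_mult. replace (Cmod a ^ 2) with (Cmod a * Cmod a) by ring.
      apply Rmult_le_0_lt_compat; lra. }
    assert (0 < / e) by (apply Rinv_0_lt_compat; lra).
    replace (e / 2) with (/ (2 * / e)) by (field; lra).
    apply Rinv_le_contravar; lra. }
  set (rho := Cst * / sq).
  assert (Hrho0 : 0 < rho) by (unfold rho; apply Rmult_lt_0_compat; lra).
  assert (Hrho13 : rho <= 1 / 3).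
  { unfold rho. apply Rmult_le_reg_r with sq; auto. rewrite Rmult_assoc, Rinv_l by lra. lra. }
  set (s0 := rho / (2 * qq)).
  assert (Hs0 : 0 < s0 <= 1) by (unfold s0; split; [apply Rdiv_lt_0_compat; lra | apply Rmult_le_reg_r with (2 * qq); [lra | unfold Rdiv; rewrite Rmult_assoc, Rinv_l by lra; lra]]).
  assert (Hrs0 : 2 * qq * s0 = rho) by (unfold s0; field; lra).
  assert (Hr25 : / (2 * qq * s0) <= e / 25).
  { rewrite Hrs0. unfold rho. rewrite Rinv_mult, Rinv_inv.
    apply Rmult_le_reg_r with (25 * Cst). lra.
    replace (e / 25 * (25 * Cst)) with (sq * sq * Cst) by (rewrite Hsqsq; field).
    assert (25 <= sq * Cst) by (apply Rmult_le_reg_r with (/ Cst); [apply Rinv_0_lt_compat; lra|]; rewrite Rmult_assoc, Rinv_r by lra; unfold Rdiv in Hsq1; lra).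
    replace (/ Cst * sq * (25 * Cst)) with (25 * sq) by (field; lra). nra. }
  fold (integ a eta lam gamma).
  fold rho.
  unfold Omega_int_outside.
  assert (Hk0 : 0 < 2 * e ^ 2) by nra.
  assert (Hee : eta ^ 2 = e ^ 2) by (unfold e; symmetry; apply pow2_abs).
  assert (I1 := seg_part a eta lam gamma rho (RtoC 0) OmP1 s0 Ha0 Heta0
    ltac:(apply (pair_ne0 (qq - 0) (- (1/3) - 0)); lra) ltac:(lra)).
  specialize (I1
    ltac:(intros s Hs; rewrite aff1, Cmod_aff1 by lra; rewrite <- Hrs0; nra)
    ltac:(intros s Hs; rewrite aff1; simpl; nra)
    ltac:(intros s Hs; rewrite aff1, Cmod_aff1 by lra; rewrite <- Hrs0; nra)).
  assert (I2 := seg_part a eta lam gamma rho OmP1 OmP2 0 Ha0 Heta0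
    ltac:(apply (pair_ne0 (1 - qq + - qq) (- (1/3) + - - (1/3))); lra) ltac:(lra)
    ltac:(intros s Hs; lra)
    ltac:(intros s Hs; rewrite aff2; simpl; nra)
    ltac:(intros s Hs; rewrite aff2; eapply Rle_lt_trans; [| apply Cmod_gt13; nra]; lra)).
  assert (I3 := seg_part a eta lam gamma rho OmP2 (RtoC 1) 0 Ha0 Heta0
    ltac:(apply (pair_ne0 (1 + - (1 - qq)) (0 + - - (1/3))); lra) ltac:(lra)
    ltac:(intros s Hs; lra)
    ltac:(intros s Hs; rewrite aff3; simpl; nra)
    ltac:(intros s Hs; rewrite aff3; eapply Rlt_le_trans; [| apply Cmod_ge_fst; nra]; nra)).
  rewrite (seg_val _ _ _ _ _ I1), (seg_val _ _ _ _ _ I2), (seg_val _ _ _ _ _ I3).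
  rewrite Hee. unfold Psi.
  rewrite aff_1, aff_0, aff_1, aff_0, aff_1, Phi_1.
  assert (Hd1 : Cminus OmP1 (RtoC 0) <> RtoC 0) by (apply (pair_ne0 (qq - 0) (- (1/3) - 0)); lra).
  assert (Hd2 : Cminus OmP2 OmP1 <> RtoC 0) by (apply (pair_ne0 (1 - qq + - qq) (- (1/3) + - - (1/3))); lra).
  assert (Hd3 : Cminus (RtoC 1) OmP2 <> RtoC 0) by (apply (pair_ne0 (1 + - (1 - qq)) (0 + - - (1/3))); lra).
  assert (Hkc : RtoC (2 * e ^ 2) <> RtoC 0) by (apply RtoC_inj_ne; lra).
  assert (Hik : RtoC (1 / (2 * e ^ 2)) = Cinv (RtoC (2 * e ^ 2))) by (apply injective_projections; simpl; field; lra).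
  rewrite Hik.
  set (k := 2 * e ^ 2) in *.
  set (E0 := cexp (Phi a gamma k (aff (RtoC 0) (Cminus OmP1 (RtoC 0)) s0))).
  set (E1 := cexp (Phi a gamma k OmP1)).
  set (E2 := cexp (Phi a gamma k OmP2)).
  set (J1 := RInt (V := C_R_CompleteNormedModule) (fun s => R0 a gamma k (aff (RtoC 0) (Cminus OmP1 (RtoC 0)) s)) s0 1).
  set (J2 := RInt (V := C_R_CompleteNormedModule) (fun s => R0 a gamma k (aff OmP1 (Cminus OmP2 OmP1) s)) 0 1).
  set (J3 := RInt (V := C_R_CompleteNormedModule) (fun s => R0 a gamma k (aff OmP2 (Cminus (RtoC 1) OmP2) s)) 0 1).
  set (d1 := Cminus OmP1 (RtoC 0)) in *.
  set (d2 := Cminus OmP2 OmP1) in *.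
  set (d3 := Cminus (RtoC 1) OmP2) in *.
  match goal with |- Cmod ?X <= _ =>
    replace X with (Cminus (Cminus (Cminus (Copp (Cmult E0 (Cinv (RtoC k)))) (Cmult d1 J1)) (Cmult d2 J2)) (Cmult d3 J3))
      by (field; auto) end.
  assert (Ed1 : d1 = (qq, - (1/3))) by (unfold d1; apply injective_projections; simpl; unfold qq; ring).
  assert (Ed2 : d2 = (1 - 2 * qq, 0)) by (unfold d2; apply injective_projections; simpl; unfold qq; ring).
  assert (Ed3 : d3 = (qq, 1/3)) by (unfold d3; apply injective_projections; simpl; unfold qq; ring).
  assert (Cd1 : Cmod d1 <= 1) by (rewrite Ed1; apply Cmod_le1; nra).
  assert (Cd2 : Cmod d2 <= 1) by (rewrite Ed2; apply Cmod_le1; nra).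
  assert (Cd3 : Cmod d3 <= 1) by (rewrite Ed3; apply Cmod_le1; nra).
  assert (B0 : Cmod E0 / k <= 1 / e ^ 3) by (apply bdry_bound; auto).
  assert (B1 : Cmod J1 <= 3500 * (gm + 3) / e ^ 3) by (apply J1_bound; auto).
  assert (B2 : Cmod J2 <= 1250 * (3 * gm + 59) / e ^ 3) by (apply J2_bound; auto).
  assert (B3 : Cmod J3 <= 13 * exp gm * (2 * gm + 6) / e ^ 3) by (apply J3_bound; auto).
  assert (M1 : Cmod (Cmult d1 J1) <= Cmod J1) by (rewrite Cmod_mult; pose proof (Cmod_ge_0 J1); pose proof (Cmod_ge_0 d1); nra).
  assert (M2 : Cmod (Cmult d2 J2) <= Cmod J2) by (rewrite Cmod_mult; pose proof (Cmod_ge_0 J2); pose proof (Cmod_ge_0 d2); nra).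
  assert (M3 : Cmod (Cmult d3 J3) <= Cmod J3) by (rewrite Cmod_mult; pose proof (Cmod_ge_0 J3); pose proof (Cmod_ge_0 d3); nra).
  assert (M0 : Cmod (Copp (Cmult E0 (Cinv (RtoC k)))) = Cmod E0 / k).
  { rewrite Cmod_opp, Cmod_mult, Cmod_inv, Cmod_R, Rabs_right by (auto; lra). reflexivity. }
  eapply Rle_trans. apply Cmod_minus_le.
  eapply Rle_trans. apply Rplus_le_compat_r. apply Cmod_minus_le.
  eapply Rle_trans. apply Rplus_le_compat_r. apply Rplus_le_compat_r. apply Cmod_minus_le.
  rewrite M0.
  replace (K * / e ^ 3) with (1 / e ^ 3 + 3500 * (gm + 3) / e ^ 3 + 1250 * (3 * gm + 59) / e ^ 3 + 13 * exp gm * (2 * gm + 6) / e ^ 3)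
    by (unfold K; field; lra).
  lra.
Qed.
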